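(* Let $(X,\mathcal R,\mu)$ be a measure space, i.e. $X$ is a set, $\mathcal R$ is a covering ring of $X$ and $\mu:\mathcal R\to\mathbf K$ is a measure. Then there exist a Hausdorff zero-dimensional space $(Y,\tau_{\mathcal G})$, whose topology $\tau_{\mathcal G}$ has as a base a covering ring $\mathcal G$ of $Y$ with $\mathcal G=\pi(\mathcal R)$, and a quotient mapping $\pi:X\to Y$, such that $\nu:=\pi(\mu)$ is a measure on $(Y,\mathcal G)$, i.e. $(Y,\mathcal G,\nu)$ is a measure space.
   Context: $\mathbf K$ is a field with a nontrivial non-Archimedean valuation $|\cdot|$, $\mathbf K\supset\mathbf Q_p$, complete as an ultrametric space. A covering ring $\mathcal R$ of a set $X$ is a family of subsets of $X$ closed under finite unions, finite intersections and set differences, whose union is $X$. A subfamily $\mathcal S\subset\mathcal R$ is shrinking if for all $A,B\in\mathcal S$ there is $C\in\mathcal S$ with $C\subset A\cap B$; for $f:\mathcal R\to\mathbf K$, $\lim_{A\in\mathcal S}f(A)=0$ means that for each $\epsilon>0$ there is $B\in\mathcal S$ with $|f(A)|\le\epsilon$ for all $A\in\mathcal S$ with $A\subset B$. A measure $\mu:\mathcal R\to\mathbf K$ is a map such that (i) $\mu(A\cup B)=\mu(A)+\mu(B)$ for disjoint $A,B\in\mathcal R$; (ii) $\|A\|_\mu:=\sup\{|\mu(B)|:B\in\mathcal R,B\subset A\}<\infty$ for each $A\in\mathcal R$; (iii) $\lim_{A\in\mathcal S}\mu(A)=0$ for every shrinking $\mathcal S\subset\mathcal R$ with $\bigcap_{S\in\mathcal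 S}S=\emptyset$. A covering ring $\mathcal R$ defines on $X$ the topology $\tau_{\mathcal R}$ with base $\mathcal R$ (all elements of $\mathcal R$ are clopen); a space is zero-dimensional if it has a base of clopen sets. If $\pi:X\to Y$ satisfies $\pi^{-1}(\mathcal G)\subset\mathcal R$, the image measure is $\pi(\mu)(A):=\mu(\pi^{-1}(A))$ for $A\in\mathcal G$. *)

(* Defs.v *)
From HB Require Import structures.
From mathcomp Require Import all_boot all_order all_algebra.
From mathcomp Require Import boolp classical_sets reals.
Set Implicit Arguments. Unset Strict Implicit. Unset Printing Implicit Defensive.
Import Order.TTheory GRing.Theory Num.Theory.
Local Open Scope classical_set_scope.
Local Open Scope ring_scope.

(** ** The base field K : a field with an absolute value [v : K -> R] (R the
    real numbers) which is non-Archimedean (ultrametric), nontrivial,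
    complete, and such that K contains Q_p (characteristic 0 and the
    restriction of [v] to Q is the p-adic absolute value up to equivalence,
    i.e. |p| < 1 for a prime p). *)
Definition nonarch_valued_field_over_Qp (R : realType) (K : fieldType)
    (v : K -> R) : Prop :=
  ((forall x, 0 <= v x) /\ (forall x, v x = 0 <-> x = 0)) /\
  (forall x y, v (x * y) = v x * v y) /\
  (forall x y, v (x + y) <= Num.max (v x) (v y)) /\
  (exists x, v x <> 0 /\ v x <> 1) /\
  (forall u : nat -> K,
     (forall e, 0 < e -> exists N, forall m n, (N <= m)%N -> (N <= n)%N ->
         v (u m - u n) < e) ->
     exists l, forall e, 0 < e -> exists N, forall n, (N <= n)%N ->
         v (u n - l) < e) /\
  [pchar K] =i pred0 /\
  (exists p, prime p /\ v (p%:R) < 1).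

Definition covering_ring (X : Type) (Rg : set (set X)) : Prop :=
  [/\ (forall A B, Rg A -> Rg B -> Rg (A `|` B)),
      (forall A B, Rg A -> Rg B -> Rg (A `&` B)),
      (forall A B, Rg A -> Rg B -> Rg (A `\` B))
    & \bigcup_(A in Rg) A = [set: X]].

Definition shrinking (X : Type) (Rg S : set (set X)) : Prop :=
  [/\ S `<=` Rg, S !=set0
    & forall A B, S A -> S B -> exists C, S C /\ C `<=` A `&` B].

Definition lim0_along (R : realType) (K : fieldType) (v : K -> R)
    (X : Type) (S : set (set X)) (f : set X -> K) : Prop :=
  forall e : R, 0 < e -> exists B, S B /\
    forall A, S A -> A `<=` B -> v (f A) <= e.

(** A measure mu : Rg -> K (values of mu outside Rg are irrelevant). *)
Definition is_measure (R : realType) (K : fieldType) (v : K -> R)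
    (X : Type) (Rg : set (set X)) (mu : set X -> K) : Prop :=
  [/\ (forall A B, Rg A -> Rg B -> A `&` B = set0 -> mu (A `|` B) = mu A + mu B),
      (forall A, Rg A -> exists M : R, forall B, Rg B -> B `<=` A -> v (mu B) <= M)
    & (forall S, shrinking Rg S -> \bigcap_(A in S) A = set0 ->
         lim0_along v S mu)].

Definition open_in_base (Y : Type) (B : set (set Y)) (U : set Y) : Prop :=
  forall y, U y -> exists A, B A /\ A y /\ A `<=` U.

Definition hausdorff_base (Y : Type) (B : set (set Y)) : Prop :=
  forall x y, x <> y -> exists U V, open_in_base B U /\ open_in_base B V /\
    U x /\ V y /\ U `&` V = set0.

Definition zero_dim_base (Y : Type) (B : set (set Y)) : Prop :=
  exists C : set (set Y),
    (forall A, C A -> open_in_base B A /\ open_in_base B (~` A)) /\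
    (forall U, open_in_base B U -> forall y, U y -> exists A, C A /\ A y /\ A `<=` U).

Definition quotient_map (X Y : Type) (RX : set (set X)) (BY : set (set Y))
    (pi : X -> Y) : Prop :=
  (forall y : Y, exists x : X, pi x = y) /\
  forall V : set Y, open_in_base BY V <-> open_in_base RX (pi @^-1` V).

Definition image_measure (K : Type) (X Y : Type) (pi : X -> Y)
    (mu : set X -> K) : set Y -> K := fun A => mu (pi @^-1` A).

(* Main.v *)
Require Import Defs.
From HB Require Import structures.
From mathcomp Require Import all_boot all_order all_algebra.
From mathcomp Require Import boolp classical_sets reals.
Local Open Scope classical_set_scope.
Local Open Scope ring_scope.

Theorem proposition2p6 (R : realType) (K : fieldType) (v : K -> R)
    (hK : nonarch_valued_field_over_Qp v)
    (X : Type) (Rg : set (set X)) (mu : set X -> K)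
    (hR : covering_ring Rg) (hmu : is_measure v Rg mu) :
  exists (Y : Type) (G : set (set Y)) (pi : X -> Y),
    covering_ring G /\
    G = [set pi @` A | A in Rg] /\
    (forall B, G B -> Rg (pi @^-1` B)) /\
    hausdorff_base G /\
    zero_dim_base G /\
    quotient_map Rg G pi /\
    is_measure v G (image_measure pi mu).
Proof.
pose P := fun x : X => [set A | Rg A /\ A x].
pose Y := {S : set (set X) | exists x, S = P x}.
pose pi := fun x : X => (exist _ (P x) (ex_intro _ x erefl) : Y).
exists Y, [set pi @` A | A in Rg], pi.
case: hR => hU hI hD hcov.
have surj : pi @` setT = setT.
  apply/seteqP; split => // -[S [x e]] _; exists x => //.
  exact: eq_exist.
have sat : forall a b A, Rg A -> pi a = pi b -> A a -> A b.
  move=> a b A RA /(congr1 sval) /= eP Aa.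
  have : P a A by [].
  by rewrite eP => -[].
have presat : forall A, Rg A -> pi @^-1` (pi @` A) = A.
  move=> A RA; apply/seteqP; split => x //=.
  - by case=> a Aa /sat; apply.
  - by move=> Ax; exists x.
have surjP : forall y, exists x, pi x = y.
  move=> y; have : (pi @` setT) y by rewrite surj.
  by case=> x _ <-; exists x.
have imgE : forall V, V = pi @` (pi @^-1` V).
  by move=> V; rewrite image_preimage.
have Gpre : forall B, [set pi @` A | A in Rg] B -> Rg (pi @^-1` B).
  by move=> B [A RA <-]; rewrite presat.
have Gimg : forall B, [set pi @` A | A in Rg] B -> B = pi @` (pi @^-1` B).
  by move=> B _; apply: imgE.
have Gof : forall A, Rg A -> [set pi @` A | A in Rg] (pi @` A).
  by move=> A RA; exists A.
have cov : forall x, exists A, Rg A /\ A x.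
  move=> x; have : [set: X] x by [].
  by rewrite -hcov => -[A RA Ax]; exists A.
have openG : forall A, Rg A -> open_in_base [set pi @` A | A in Rg] (pi @` A).
  by move=> A RA y Ay; exists (pi @` A); split; [exact: Gof|split].
have sep : forall a b A, Rg A -> A a -> ~ A b -> exists U V,
    open_in_base [set pi @` A | A in Rg] U /\ open_in_base [set pi @` A | A in Rg] V /\
    U (pi a) /\ V (pi b) /\ U `&` V = set0.
  move=> a b A RA Aa nAb.
  have [B [RB Bb]] := cov b.
  exists (pi @` A), (pi @` (B `\` A)); split; first exact: openG.
  split; first exact: openG (hD _ _ RB RA).
  split; first by exists a.
  split; first by exists b.
  apply/seteqP; split => // y [[a' Aa' <-] [b' [Bb' nAb'] e]].
  by apply: nAb'; apply: (sat a'); [|rewrite e|].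
split.
  split.
  - move=> _ _ [A RA <-] [B RB <-]; exists (A `|` B); first exact: hU.
    by rewrite image_setU.
  - move=> _ _ [A RA <-] [B RB <-]; exists (A `&` B); first exact: hI.
    by rewrite [RHS]imgE preimage_setI !presat.
  - move=> _ _ [A RA <-] [B RB <-]; exists (A `\` B); first exact: hD.
    by rewrite [RHS]imgE !setDE preimage_setI -preimage_setC !presat.
  - apply/seteqP; split => // -[S [x e]] _.
    have [A [RA Ax]] := cov x.
    exists (pi @` A); first exact: Gof.
    by exists x => //; apply: eq_exist.
split; first by [].
split; first exact: Gpre.
split.
  move=> y1 y2 ne.
  have [a ea] : exists a, pi a = y1.
    by exact: surjP.
  have [b eb] : exists b, pi b = y2.
    by exact: surjP.
  subst y1 y2.
  have [A [RA h]] : exists A, Rg A /\ ~ (A a <-> A b).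
    case: (pselect (exists A, Rg A /\ ~ (A a <-> A b))) => // H.
    exfalso; apply: ne.
    have HH : forall A, Rg A -> (A a <-> A b).
      move=> A RA; case: (pselect (A a <-> A b)) => // nq.
      by exfalso; apply: H; exists A.
    have eP : P a = P b.
      apply/seteqP; split => A [RA HA]; split => //; by apply/(HH A RA).
    exact: eq_exist.
  have [Aa|nAa] := pselect (A a).
    by apply: (sep _ _ _ RA Aa) => Ab; apply: h; split.
  have Ab : A b by case: (pselect (A b)) => // nAb; exfalso; apply: h; split.
  have [U [V [oU [oV [Ub [Va UV]]]]]] := sep _ _ _ RA Ab nAa.
  by exists V, U; do !split => //; rewrite setIC.
split.
  exists [set pi @` A | A in Rg]; split.
    move=> _ [A RA <-]; split; first exact: openG.
    move=> y nAy.
    have [x ex] : exists x, pi x = y.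
      by exact: surjP.
    subst y.
    have [B [RB Bx]] := cov x.
    exists (pi @` (B `\` A)); split; first exact: Gof (hD _ _ RB RA).
    split; first by exists x => //; split => // Ax; apply: nAy; exists x.
    move=> _ [z [Bz nAz] <-] [w Aw e].
    by apply: nAz; apply: (sat w).
  move=> U oU y Uy; have [A [GA [Ay AU]]] := oU y Uy.
  by exists A.
split.
  split.
    exact: surjP.
  move=> V; split.
  - move=> oV x Vx; have [_ [[A0 RA0 <-] [Ay AU]]] := oV (pi x) Vx.
    exists A0; split => //; split.
      by rewrite -(presat _ RA0).
    by move=> z A0z; apply: AU; exists z.
  - move=> oV y Vy.
    have [x ex] : exists x, pi x = y.
      by exact: surjP.
    subst y.
    have [A0 [RA0 [A0x A0V]]] := oV x Vy.
    exists (pi @` A0); split; first exact: Gof.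
    split; first by exists x.
    by move=> _ [z A0z <-]; apply: A0V.
case: hmu => madd mbd mlim.
rewrite /image_measure; split.
- move=> A B GA GB AB.
  rewrite preimage_setU madd //; try exact: Gpre.
  by rewrite -preimage_setI AB preimage_set0.
- move=> A GA; have [M HM] := mbd _ (Gpre _ GA).
  exists M => B GB BA; apply: HM; first exact: Gpre.
  by move=> x /= Bx; apply: BA.
- move=> S [SG [B0 SB0] Sdir] Sempty.
  pose S' := [set pi @^-1` B | B in S].
  have sh : shrinking Rg S'.
    split.
    + by move=> _ [B SB <-]; apply: Gpre; apply: SG.
    + by exists (pi @^-1` B0), B0.
    + move=> _ _ [B1 SB1 <-] [B2 SB2 <-].
      have [C [SC CB]] := Sdir _ _ SB1 SB2.
      exists (pi @^-1` C); split; first by exists C.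
      by move=> x /= Cx; have := CB _ Cx.
  have e0 : \bigcap_(A in S') A = set0.
    apply/seteqP; split => // x Hx.
    have : (\bigcap_(A in S) A) (pi x).
      by move=> B SB; apply: (Hx (pi @^-1` B)); exists B.
    by rewrite Sempty.
  move=> e e_gt0; have [_ [[B SB <-] HB]] := mlim _ sh e0 e e_gt0.
  exists B; split => // A SA AB; apply: HB; first by exists A.
  by move=> x /= Ax; apply: AB.
Qed.
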